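(* Let $n=2m+2$ with $m\ge0$, let $a,b,c,d\in\mathbb{C}$, and suppose $T_n$ (degree $n$) and $U_{n-2}$ (degree at most $n-2$) satisfy $T_n^2-HU_{n-2}^2=1$ with $$T_n(z)=1-\frac{2(z-c)(z-d)\prod_{j=1}^m(z-x_j)^2}{(a-c)(a-d)\prod_{j=1}^m(a-x_j)^2}=-1+\frac{2(z-a)(z-b)\prod_{j=1}^m(z-y_j)^2}{(c-a)(c-b)\prod_{j=1}^m(c-y_j)^2}$$ for some $x_1,\dots,x_m,y_1,\dots,y_m\in\mathbb{C}$. Put $s_k:=\tfrac12\bigl(a^k-b^k+c^k+d^k\bigr)$, $k=1,\dots,2m+1$, and form $F_k,\mathbf F,\mathbf F_i$ with $\nu=m+1$, $\mu=m$. Then $\det\mathbf F\ne0$ and $x_1,\dots,x_m$ (with multiplicity) are exactly the zeros of $$x^{m}\det\mathbf F+x^{m-1}\det\mathbf F_1+\dots+x\det\mathbf F_{m-1}+\det\mathbf F_m.$$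
   Context: $H(z)=(z-a)(z-b)(z-c)(z-d)$. Given complex numbers $s_1,s_2,\dots$: $F_0:=1$, $F_k:=0$ for $k<0$, and for $k\ge1$, $F_k:=\frac{(-1)^k}{k!}\det M_k$ where $M_k$ is the $k\times k$ matrix with entry $s_{i-j+1}$ for $j\le i$, entry $i$ at position $(i,i+1)$, and $0$ elsewhere. For integers $\nu\ge0,\mu\ge0$, $\mathbf F$ is the $\mu\times\mu$ matrix with $(i,j)$ entry $F_{\nu+i-j}$, and $\mathbf F_i$ ($1\le i\le\mu$) is $\mathbf F$ with its $i$-th column replaced by $(-F_{\nu+1},\dots,-F_{\nu+\mu})^T$. Convention: if $\mu=0$, $\det\mathbf F:=1$. *)

(* Defs.v *)
From HB Require Import structures.
From mathcomp Require Import all_boot all_order all_algebra.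
Set Implicit Arguments. Unset Strict Implicit. Unset Printing Implicit Defensive.
Import Order.TTheory GRing.Theory Num.Theory.
Local Open Scope ring_scope.

Section Defs.
Variable C : numClosedFieldType.

Definition Hpoly (a b c d : C) : {poly C} :=
  ('X - a%:P) * ('X - b%:P) * ('X - c%:P) * ('X - d%:P).

(* M_k (1-indexed in the paper; here 0-indexed i j : 'I_k, paper row i+1, col j+1):
   entry s_{i-j+1} if j <= i, entry (i+1) at position (i+1, i+2), 0 elsewhere. *)
Definition Mmx (s : nat -> C) (k : nat) : 'M[C]_k :=
  \matrix_(i < k, j < k)
    if (j <= i)%N then s (i - j).+1
    else if j == i.+1 :> nat then (i.+1)%:R else 0.

Definition Fk (s : nat -> C) (k : int) : C :=
  match k with
  | Posz 0 => 1
  | Posz k' => (-1) ^+ k' / (k'`!)%:R * \det (Mmx s k')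
  | Negz _ => 0
  end.

Definition Fmx (s : nat -> C) (nu mu : nat) : 'M[C]_mu :=
  \matrix_(i < mu, j < mu) Fk s ((nu + i)%:Z - j%:Z).

(* bold F_i : column i replaced by (-F_{nu+1}, ..., -F_{nu+mu})^T
   (here i : 'I_mu is 0-indexed, corresponding to the paper's i+1) *)
Definition Fimx (s : nat -> C) (nu mu : nat) (i : 'I_mu) : 'M[C]_mu :=
  \matrix_(r < mu, c < mu)
    if c == i then - Fk s (nu + r.+1)%:Z else Fk s ((nu + r)%:Z - c%:Z).

Definition sk (a b c d : C) (k : nat) : C :=
  (a ^+ k - b ^+ k + c ^+ k + d ^+ k) / 2.

End Defs.

(* Main.v *)
Require Import Defs.
From HB Require Import structures.
From mathcomp Require Import all_boot all_order all_algebra.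
From mathcomp Require Import ring lra zify.
Import Order.TTheory GRing.Theory Num.Theory.
Local Open Scope ring_scope.
Definition Mg {C : numClosedFieldType} (s u : nat -> C) (k : nat) : 'M[C]_k :=
  \matrix_(i < k, j < k)
    if (j <= i)%N then (if i.+1 == k then u else s) (i - j).+1
    else if j == i.+1 :> nat then (i.+1)%:R else 0.

Definition fn {C : numClosedFieldType} (s : nat -> C) (j : nat) : C :=
  (-1) ^+ j / (j`!)%:R * \det (Mmx s j).

Lemma Mmx_Mg (C : numClosedFieldType) (s : nat -> C) k : Mmx s k = Mg s s k.
Proof. by apply/matrixP => i j; rewrite !mxE if_same. Qed.

Lemma fact_nz (C : numClosedFieldType) j : (j`!)%:R != 0 :> C.
Proof. by rewrite pnatr_eq0 -lt0n fact_gt0. Qed.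

Lemma sgsq (C : numClosedFieldType) j : (-1) ^+ j * (-1) ^+ j = 1 :> C.
Proof. by rewrite -exprMn mulrNN mulr1 expr1n. Qed.

Lemma detMmx_fn (C : numClosedFieldType) (s : nat -> C) j :
  \det (Mmx s j) = (-1) ^+ j * (j`!)%:R * fn s j.
Proof.
rewrite /fn; have := fact_nz C j; have := sgsq C j.
move: ((-1) ^+ j) (j`!%:R) (\det _) => a b d hab hb.
by rewrite -[RHS]/(a * b * (a * b^-1 * d)) [RHS](_ : _ = (a * a) * (b / b) * d);
  [rewrite hab mulfV // !mul1r | ring].
Qed.
Lemma sg2 (C : numClosedFieldType) n : (-1) ^+ (n + n) = 1 :> C.
Proof. by rewrite exprD sgsq. Qed.
Lemma sg2S (C : numClosedFieldType) n : (-1) ^+ (n + n.+1) = -1 :> C.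
Proof. by rewrite addnS exprS exprD sgsq mulr1. Qed.
Lemma detMg (C : numClosedFieldType) (s : nat -> C) k : forall u,
  \det (Mg s u k.+1) = (-1) ^+ k * (k`!)%:R * \sum_(i < k.+1) u i.+1 * fn s (k - i).
Proof.
elim: k => [|k IH] u.
  rewrite det_mx11 !mxE /= big_ord1 /fn det_mx00 /=.
  by rewrite subnn !expr0 !mul1r invr1 !mulr1.
rewrite (expand_det_col _ ord_max) (bigD1 ord_max) //= (bigD1 (inord k)) /=; last first.
  by rewrite -(inj_eq val_inj) /= inordK // neq_ltn ltnSn.
rewrite big1 ?addr0; last first.
  move=> i /andP [] /eqP hi1 /eqP hi2; rewrite !mxE.
  have hi : (i < k)%N.
    have := ltn_ord i; rewrite ltnS leq_eqVlt => /orP [/eqP h|]; first by case: hi1; apply: val_inj.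
    rewrite ltnS leq_eqVlt => /orP [/eqP h|//]; by case: hi2; apply: val_inj; rewrite /= inordK.
  rewrite leqNgt ltnS (ltnW hi) /= eqSS.
  by rewrite gtn_eqF // mul0r.
have m1 : row' ord_max (col' ord_max (Mg s u k.+2)) = Mmx s k.+1.
  apply/matrixP => i j; rewrite !mxE /= /bump !(leqNgt k.+1) !ltn_ord /=.
  by rewrite !add0n eqSS (ltn_eqF (ltn_ord i)).
have m2 : row' (inord k) (col' ord_max (Mg s u k.+2)) = Mg s (fun n => u n.+1) k.+1.
  apply/matrixP => i j; rewrite !mxE /= /bump inordK // (leqNgt k.+1) ltn_ord /= add0n.
  case: (ltnP i k) => hik.
    rewrite add0n !eqSS (ltn_eqF hik) (ltn_eqF (leq_trans hik (leqnSn _))).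
    by [].
  have hik' : i = k :> nat by apply/eqP; rewrite eqn_leq hik -ltnS ltn_ord.
  rewrite add1n hik' eqxx.
  have hj : (j <= k.+1)%N by rewrite ltnW // -ltnS.
  have hj' : (j <= k)%N by rewrite -ltnS (ltn_ord j).
  by rewrite hj hj' eqxx subSn.
rewrite /cofactor m1 m2 IH detMmx_fn !mxE /= inordK // leqnn eqxx ltnn /= eqxx.
rewrite subnn sg2 sg2S [in RHS]big_ord_recl /= subn0.
under [in RHS]eq_bigr do rewrite /bump /= add1n subSS.
rewrite factS natrM !exprS.
ring.
Qed.

Lemma newton (C : numClosedFieldType) (s : nat -> C) k :
  k.+1%:R * fn s k.+1 = - \sum_(i < k.+1) s i.+1 * fn s (k - i).
Proof.
rewrite {1}/fn Mmx_Mg detMg factS natrM exprS.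
have h1 := fact_nz C k.
have h2 : k.+1%:R != 0 :> C by rewrite pnatr_eq0.
move: (\sum_(i < k.+1) _) => S.
have he := sgsq C k; move: ((-1) ^+ k) he => e he.
rewrite [LHS](_ : _ = - (e * e) * S); first by rewrite he mulN1r.
by field; rewrite h1 [1 + _]addrC natr1 h2.
Qed.

Definition eqm {C : numClosedFieldType} (K : nat) (p q : {poly C}) :=
  forall i, (i < K)%N -> p`_i = q`_i.

Lemma eqm_refl (C : numClosedFieldType) K (p : {poly C}) : eqm K p p.
Proof. by []. Qed.
Lemma eqm_sym (C : numClosedFieldType) K (p q : {poly C}) : eqm K p q -> eqm K q p.
Proof. by move=> h i hi; rewrite h. Qed.
Lemma eqm_trans (C : numClosedFieldType) K (p q r : {poly C}) :
  eqm K p q -> eqm K q r -> eqm K p r.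
Proof. by move=> h1 h2 i hi; rewrite h1 ?h2. Qed.
Lemma eqmD (C : numClosedFieldType) K (p q p' q' : {poly C}) :
  eqm K p q -> eqm K p' q' -> eqm K (p + p') (q + q').
Proof. by move=> h1 h2 i hi; rewrite !coefD h1 ?h2. Qed.
Lemma eqmN (C : numClosedFieldType) K (p q : {poly C}) :
  eqm K p q -> eqm K (- p) (- q).
Proof. by move=> h1 i hi; rewrite !coefN h1. Qed.
Lemma eqmMl (C : numClosedFieldType) K (p q r : {poly C}) :
  eqm K p q -> eqm K (r * p) (r * q).
Proof.
move=> h i hi; rewrite !coefM; apply: eq_bigr => j _.
by rewrite h // (leq_ltn_trans (leq_subr _ _) hi).
Qed.
Lemma eqmMr (C : numClosedFieldType) K (p q r : {poly C}) :
  eqm K p q -> eqm K (p * r) (q * r).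
Proof. by move=> h; rewrite ![_ * r]mulrC; apply: eqmMl. Qed.
Lemma eqm_le (C : numClosedFieldType) K K' (p q : {poly C}) :
  (K' <= K)%N -> eqm K p q -> eqm K' p q.
Proof. by move=> hK h i hi; rewrite h // (leq_trans hi). Qed.

Definition th {C : numClosedFieldType} (p : {poly C}) := 'X * p^`().

Lemma coef_th (C : numClosedFieldType) (p : {poly C}) i : (th p)`_i = p`_i *+ i.
Proof. by rewrite /th coefXM; case: i => [|i] //=; rewrite coef_deriv. Qed.
Lemma thM (C : numClosedFieldType) (p q : {poly C}) : th (p * q) = th p * q + p * th q.
Proof. by rewrite /th derivM mulrDr mulrA mulrCA. Qed.
Lemma thB (C : numClosedFieldType) (p q : {poly C}) : th (p - q) = th p - th q.
Proof. by rewrite /th derivB mulrBr. Qed.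

Definition lin {C : numClosedFieldType} (t : C) : {poly C} := 1 - t%:P * 'X.
Lemma th_lin (C : numClosedFieldType) (t : C) : th (lin t) = - (t%:P * 'X).
Proof. by rewrite /th /lin derivB derivC deriv_mulC derivX sub0r mulr1 mulrN mulrC. Qed.

Definition Ap {C : numClosedFieldType} K (t : C) : {poly C} :=
  \poly_(i < K) (if i == 0%N then 0 else t ^+ i).

Lemma Ap_lin (C : numClosedFieldType) K (t : C) : eqm K (Ap K t * lin t) (t%:P * 'X).
Proof.
move=> i hi; rewrite /lin mulrBr mulr1 coefB coefCM coefX mulrA coefMX coefMC !coef_poly hi.
case: i hi => [|[|i]] hi /=; first by rewrite subr0 mulr0.
- by rewrite mulr1 expr1 (ltnW hi) mul0r subr0.
- by rewrite (ltnW hi) exprS mulrC subrr mulr0.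
Qed.

Lemma th_uniq (C : numClosedFieldType) K (L D : {poly C}) :
  eqm K (th D) (- (L * D)) -> L`_0 = 0 -> D`_0 = 0 -> eqm K D 0.
Proof.
move=> h hL hD i; elim: i {-2}i (leqnn i) => [|n IH] i hin hi.
  by move: hin; rewrite leqn0 => /eqP ->; rewrite hD coef0.
case: (ltnP i n.+1) => hi'; first by apply: IH.
have ei : i = n.+1 by apply/eqP; rewrite eqn_leq hin hi'.
subst i.
have := h n.+1 hi; rewrite coef_th coefN coefM big_ord_recl /= hL mul0r add0r.
rewrite big1 ?oppr0 ?coef0.
  by move/eqP; rewrite mulrn_eq0 /= => /eqP.
move=> j _; rewrite IH ?mulr0 // /bump /= add1n subSS ?leq_subr //.
  by rewrite coef0 mulr0.
by rewrite (leq_ltn_trans (leq_subr _ _)) // ltnW.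
Qed.

Definition Phi {C : numClosedFieldType} K (s : nat -> C) : {poly C} := \poly_(i < K) fn s i.
Definition Sp {C : numClosedFieldType} K (s : nat -> C) : {poly C} :=
  \poly_(i < K) (if i == 0%N then 0 else s i).

Lemma fn0 (C : numClosedFieldType) (s : nat -> C) : fn s 0 = 1.
Proof. by rewrite /fn det_mx00 expr0 invr1 !mulr1. Qed.

Lemma th_Phi (C : numClosedFieldType) K (s : nat -> C) :
  eqm K (th (Phi K s)) (- (Sp K s * Phi K s)).
Proof.
move=> i hi; rewrite coef_th coefN coefM !coef_poly hi.
case: i hi => [|k] hi.
  by rewrite big_ord1 mulr0n coef_poly /= (leq_ltn_trans _ hi) // mul0r oppr0.
rewrite big_ord_recl coef_poly /= (leq_ltn_trans _ hi) // mul0r add0r -mulr_natl newton.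
congr (- _); apply: eq_bigr => j _; rewrite !coef_poly /bump /= add1n subSS.
have hj : (j.+1 < K)%N by rewrite (leq_ltn_trans _ hi) // ltnS -ltnS.
by rewrite hj (leq_ltn_trans (leq_subr _ _) (ltnW hi)).
Qed.

Lemma Sp_sk (C : numClosedFieldType) K (a b c d : C) :
  Sp K (sk a b c d) *+ 2 = Ap K a - Ap K b + Ap K c + Ap K d.
Proof.
apply/polyP => i; rewrite coefMn !coefD coefN !coef_poly.
case: (i < K)%N; last by rewrite mul0rn !subrr !addr0.
case: (i == 0%N); first by rewrite mul0rn subrr !addr0.
by rewrite /sk; field.
Qed.

Lemma Ap0 (C : numClosedFieldType) K (t : C) : (Ap K t)`_0 = 0.
Proof. by rewrite coef_poly; case: ifP. Qed.

Lemma Phi_sq (C : numClosedFieldType) K (a b c d : C) :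
  eqm K (Phi K (sk a b c d) ^+ 2 * lin b) (lin a * lin c * lin d).
Proof.
case: K => [|K]; first by [].
set s := sk a b c d; set F := Phi K.+1 s.
set Q := F ^+ 2 * lin b; set P := lin a * lin c * lin d.
set L := Ap K.+1 a + Ap K.+1 c + Ap K.+1 d.
have hQ : eqm K.+1 (th Q) (- (L * Q)).
  have e1 : th Q = th F * (F *+ 2 * lin b) - F ^+ 2 * (b%:P * 'X).
    by rewrite /Q thM th_lin expr2 thM; ring.
  rewrite e1.
  apply: (@eqm_trans _ _ _ (- (Sp K.+1 s * F) * (F *+ 2 * lin b) - F ^+ 2 * (b%:P * 'X))).
    by apply: eqmD; [apply: eqmMr; apply: th_Phi | apply: eqm_refl].
  have e2 : - (Sp K.+1 s * F) * (F *+ 2 * lin b) - F ^+ 2 * (b%:P * 'X) =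
      - (L * Q) + (Ap K.+1 b * lin b) * F ^+ 2 - F ^+ 2 * (b%:P * 'X).
    have -> : - (Sp K.+1 s * F) * (F *+ 2 * lin b) = - ((Sp K.+1 s *+ 2) * Q).
      by rewrite /Q; ring.
    by rewrite Sp_sk /L /Q; ring.
  rewrite e2.
  apply: (@eqm_trans _ _ _ (- (L * Q) + (b%:P * 'X) * F ^+ 2 - F ^+ 2 * (b%:P * 'X))).
    apply: eqmD; last by apply: eqm_refl.
    apply: eqmD; first by apply: eqm_refl.
    by apply: eqmMr; apply: Ap_lin.
  have -> : - (L * Q) + (b%:P * 'X) * F ^+ 2 - F ^+ 2 * (b%:P * 'X) = - (L * Q) by ring.
  by apply: eqm_refl.
have hP : eqm K.+1 (th P) (- (L * P)).
  have e1 : th P = - ((a%:P * 'X) * lin c * lin d + (c%:P * 'X) * lin a * lin d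
                      + (d%:P * 'X) * lin a * lin c).
    by rewrite /P !thM !th_lin; ring.
  have e2 : L * P = (Ap K.+1 a * lin a) * lin c * lin d + (Ap K.+1 c * lin c) * lin a * lin d
                      + (Ap K.+1 d * lin d) * lin a * lin c.
    by rewrite /L /P; ring.
  rewrite e1 e2; apply: eqmN; apply: eqm_sym.
  by apply: eqmD; [apply: eqmD|]; apply: eqmMr; apply: eqmMr; apply: Ap_lin.
have hD : eqm K.+1 (Q - P) 0.
  apply: (@th_uniq _ _ L).
  - rewrite thB; have -> : - (L * (Q - P)) = - (L * Q) - - (L * P) by ring.
    by apply: eqmD => //; apply: eqmN.
  - by rewrite /L !coefD !Ap0 !addr0.
  - rewrite coefB /Q /P !coef0M /F coef_poly /= fn0 /lin.
    by rewrite !coefB !coef1 !coefCM !coefX /= !mulr0 !subr0 !mulr1 subrr.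
move=> i hi; apply/eqP; rewrite -subr_eq0 -coefB; apply/eqP.
by rewrite hD // coef0.
Qed.

Lemma eqm_cancel (C : numClosedFieldType) K (U W : {poly C}) :
  eqm K (U * W) 0 -> W`_0 != 0 -> eqm K U 0.
Proof.
move=> h hW i; elim: i {-2}i (leqnn i) => [|n IH] i hin hi.
  move: hin hi; rewrite leqn0 => /eqP -> hi; move: (h 0%N hi); rewrite coef0M coef0 => /eqP.
  by rewrite mulf_eq0 (negbTE hW) orbF => /eqP.
case: (ltnP i n.+1) => hi'; first by apply: IH.
have ei : i = n.+1 by apply/eqP; rewrite eqn_leq hin hi'.
subst i.
have := h n.+1 hi; rewrite coefM big_ord_recr /= subnn big1 ?add0r.
  by rewrite coef0 => /eqP; rewrite mulf_eq0 (negbTE hW) orbF => /eqP.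
move=> j _; rewrite IH ?coef0 ?mul0r //=; first by rewrite -ltnS.
by rewrite (ltn_trans _ hi).
Qed.

Lemma lin_inv (C : numClosedFieldType) K (t : C) :
  eqm K (lin t * \poly_(i < K) t ^+ i) 1.
Proof.
move=> i hi; rewrite /lin mulrBl mul1r coefB -mulrA coefCM coefXM !coef_poly coef1 hi.
case: i hi => [|i] hi /=; first by rewrite mulr0 subr0 expr0.
by rewrite (ltnW hi) exprS subrr.
Qed.

Lemma step2 (C : numClosedFieldType) K (a b c d : C) (Xt Yt : {poly C}) :
  eqm K (lin a * lin b * Yt ^+ 2) (lin c * lin d * Xt ^+ 2) ->
  Xt`_0 = 1 -> Yt`_0 = 1 ->
  eqm K (Xt * Phi K (sk a b c d)) (lin a * Yt).
Proof.
case: K => [|K] hid hX hY; first by [].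
set F := Phi K.+1 (sk a b c d); set U := Xt * F; set V := lin a * Yt.
have h1 : eqm K.+1 (U ^+ 2 * lin b) (V ^+ 2 * lin b).
  have -> : U ^+ 2 * lin b = Xt ^+ 2 * (F ^+ 2 * lin b) by rewrite /U; ring.
  apply: (@eqm_trans _ _ _ (Xt ^+ 2 * (lin a * lin c * lin d))).
    by apply: eqmMl; apply: Phi_sq.
  have -> : Xt ^+ 2 * (lin a * lin c * lin d) = lin a * (lin c * lin d * Xt ^+ 2) by ring.
  have -> : V ^+ 2 * lin b = lin a * (lin a * lin b * Yt ^+ 2) by rewrite /V; ring.
  by apply: eqmMl; apply: eqm_sym.
have h2 : eqm K.+1 (U ^+ 2) (V ^+ 2).
  have e : forall W : {poly C}, eqm K.+1 (W * lin b * \poly_(i < K.+1) b ^+ i) W.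
    move=> W; apply: (@eqm_trans _ _ _ (W * 1)); last by rewrite mulr1.
    by rewrite -mulrA; apply: eqmMl; apply: lin_inv.
  apply: (@eqm_trans _ _ _ (U ^+ 2 * lin b * \poly_(i < K.+1) b ^+ i)).
    by apply: eqm_sym; apply: e.
  apply: (@eqm_trans _ _ _ (V ^+ 2 * lin b * \poly_(i < K.+1) b ^+ i)); last by apply: e.
  by apply: eqmMr.
have h3 : eqm K.+1 ((U - V) * (U + V)) 0.
  move=> i hi; rewrite coef0; have -> : (U - V) * (U + V) = U ^+ 2 - V ^+ 2 by ring.
  by rewrite coefB h2 // subrr.
have h4 : (U + V)`_0 != 0.
  rewrite coefD /U /V !coef0M hX hY /F coef_poly /= fn0 /lin coefB coef1 coefCM coefX /=.
  by rewrite mulr0 subr0 !mul1r -[1 + 1]/(2%:R) pnatr_eq0.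
have h5 := eqm_cancel _ _ _ _ h3 h4.
by move=> i hi; apply/eqP; rewrite -subr_eq0 -coefB h5 ?coef0.
Qed.

Lemma prodMc (C : numClosedFieldType) m (w : C) (f : 'I_m -> C) :
  \prod_(j < m) (w * f j) = w ^+ m * \prod_(j < m) f j.
Proof.
elim: m f => [|m IH] f; first by rewrite !big_ord0 expr0 mulr1.
by rewrite !big_ord_recr /= IH exprS; ring.
Qed.

Lemma poly_eq_nz (C : numClosedFieldType) (p q : {poly C}) :
  (forall w, w != 0 -> p.[w] = q.[w]) -> p = q.
Proof.
move=> h; apply/eqP; rewrite -subr_eq0; apply/eqP.
apply: (@roots_geq_poly_eq0 _ _ [seq i.+1%:R | i <- iota 0 (size (p - q))]).
- apply/allP => z /mapP [i _ ->]; rewrite /root hornerD hornerN h ?subrr //.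
  by rewrite pnatr_eq0.
- rewrite map_inj_uniq ?iota_uniq // => i j /eqP; rewrite eqr_nat eqSS.
  by move/eqP.
- by rewrite size_map size_iota.
Qed.

Lemma eval_lin (C : numClosedFieldType) (t w : C) : w != 0 ->
  (lin t).[w] = w * (w^-1 - t).
Proof.
move=> hw; rewrite /lin hornerD hornerN hornerM hornerC hornerX hornerC.
by rewrite mulrBr mulfV // mulrC.
Qed.

Lemma eval_prodlin (C : numClosedFieldType) m (x : 'I_m -> C) (w : C) : w != 0 ->
  (\prod_(j < m) lin (x j)).[w] = w ^+ m * \prod_(j < m) (w^-1 - x j).
Proof.
move=> hw; rewrite horner_prod -prodMc; apply: eq_bigr => j _.
by rewrite eval_lin.
Qed.

Lemma eval_prodX (C : numClosedFieldType) m (x : 'I_m -> C) (z : C) :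
  (\prod_(j < m) ('X - (x j)%:P) ^+ 2).[z] = (\prod_(j < m) (z - x j)) ^+ 2.
Proof.
rewrite horner_prod -prodrXl; apply: eq_bigr => j _.
by rewrite horner_exp hornerXsubC.
Qed.

Lemma step1 (C : numClosedFieldType) (m : nat) (a b c d : C) (T : {poly C})
    (x y : 'I_m -> C) :
  (c - a) * (c - b) * \prod_(j < m) (c - y j) ^+ 2 != 0 ->
  T = 1 - (2 / ((a - c) * (a - d) * \prod_(j < m) (a - x j) ^+ 2)) *:
            (('X - c%:P) * ('X - d%:P) * \prod_(j < m) ('X - (x j)%:P) ^+ 2) ->
  T = -1 + (2 / ((c - a) * (c - b) * \prod_(j < m) (c - y j) ^+ 2)) *:
            (('X - a%:P) * ('X - b%:P) * \prod_(j < m) ('X - (y j)%:P) ^+ 2) ->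
  exists g : C, g != 0 /\
    lin a * lin b * (\prod_(j < m) lin (y j)) ^+ 2
    - lin c * lin d * (\prod_(j < m) lin (x j)) ^+ 2 = g%:P * 'X^(2 * m + 2).
Proof.
move=> hDc hT1 hT2.
set al := 2 / _ in hT1; set be := 2 / _ in hT2.
set RX := _ * _ * _ in hT1; set RY := _ * _ * _ in hT2.
have hbe : be != 0 by rewrite /be mulf_neq0 ?invr_eq0 // pnatr_eq0.
have hR : forall z, RY.[z] = (2 - al * RX.[z]) / be.
  move=> z; have := congr1 (fun p => p.[z]) (etrans (esym hT1) hT2).
  rewrite /= !(hornerD, hornerN, hornerZ, hornerC) => e.
  apply/(mulIf hbe); rewrite divfK // mulrC.
  have -> : be * RY.[z] = (-1 + be * RY.[z]) + 1 by ring.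
  by rewrite -e; ring.
set Xt := \prod_(j < m) lin (x j); set Yt := \prod_(j < m) lin (y j).
set ka := al / be + 1.
have hid : lin a * lin b * Yt ^+ 2 - lin c * lin d * Xt ^+ 2 =
           (2 / be)%:P * 'X^(2 * m + 2) - ka%:P * (lin c * lin d * Xt ^+ 2).
  have e2 : (2 * m + 2 = (m + m).+2)%N by rewrite addn2 mul2n addnn.
  apply: poly_eq_nz => w hw.
  rewrite !(hornerD, hornerN, hornerM, horner_exp, hornerC, hornerXn).
  rewrite /Xt /Yt !eval_prodlin // !hornerX.
  have := hR w^-1; rewrite /RX /RY !(hornerM, hornerXsubC) !eval_prodX.
  set PX := \prod_(j < m) _; set PY := \prod_(j < m) _ => hR'.
  transitivity (w ^+ (2 * m + 2) * ((w^-1 - a) * (w^-1 - b) * PX ^+ 2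
                                   - (w^-1 - c) * (w^-1 - d) * PY ^+ 2)).
    rewrite e2 !exprS !exprD; field; exact: hw.
  rewrite hR' /ka.
  rewrite e2 !exprS !exprD; field.
  by rewrite hw hbe.
have hka : ka = 0.
  have := congr1 (fun p => p.[0]) hid.
  rewrite /= !(hornerD, hornerN, hornerM, horner_exp, hornerC, hornerXn, hornerX).
  rewrite /Xt /Yt !horner_prod !big1 => [| j _ | j _]; last 2 first.
  - by rewrite /lin hornerD hornerN hornerM hornerC hornerX mulr0 subr0.
  - by rewrite /lin hornerD hornerN hornerM hornerC hornerX mulr0 subr0.
  rewrite !mulr0 !subr0 expr0n /= addn2 !mulr1 subrr mulr0 sub0r.
  by move/esym/eqP; rewrite oppr_eq0 => /eqP.
exists (2 / be); split; first by rewrite mulf_neq0 ?invr_eq0 // pnatr_eq0.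
by rewrite hid hka mul0r subr0.
Qed.

Lemma prodlin0 (C : numClosedFieldType) m (x : 'I_m -> C) :
  (\prod_(j < m) lin (x j))`_0 = 1.
Proof.
rewrite -horner_coef0 horner_prod big1 // => j _.
by rewrite /lin hornerD hornerN hornerM hornerC hornerX mulr0 subr0.
Qed.

Lemma Fk_fn (C : numClosedFieldType) (s : nat -> C) (n : nat) : Fk s n%:Z = fn s n.
Proof. by case: n => [|n] //=; rewrite fn0. Qed.

Lemma coefM_le (C : numClosedFieldType) (p q : {poly C}) n i :
  (size p <= n.+1)%N -> (n <= i)%N ->
  (p * q)`_i = \sum_(j < n.+1) p`_j * q`_(i - j).
Proof.
move=> hp hi; rewrite coefM.
rewrite -(big_mkord xpredT (fun j => p`_j * q`_(i - j))).
rewrite -(big_mkord xpredT (fun j => p`_j * q`_(i - j))).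
rewrite (big_cat_nat (n := n.+1)) //= [X in _ + X]big1_seq ?addr0 // => j /andP [_].
by rewrite mem_iota => /andP [hj _]; rewrite nth_default ?mul0r // (leq_trans hp hj).
Qed.

Lemma size_lin (C : numClosedFieldType) (t : C) : (size (lin t) <= 2)%N.
Proof.
rewrite /lin (leq_trans (size_polyD _ _)) // size_polyN geq_max size_poly1 /=.
rewrite (leq_trans (size_mul_leq _ _)) // size_polyX size_polyC.
by case: (t != 0).
Qed.

Lemma size_prodlin (C : numClosedFieldType) m (x : 'I_m -> C) :
  (size (\prod_(j < m) lin (x j))%R <= m.+1)%N.
Proof.
elim: m x => [|m IH] x; first by rewrite big_ord0 size_poly1.
rewrite big_ord_recr /= (leq_trans (size_mul_leq _ _)) //.
have h1 := IH (fun j => x (widen_ord (leqnSn m) j)); have h2 := size_lin _ (x ord_max).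
move: h1 h2; set u := size _; set v := size _; lia.
Qed.

Lemma eqm_size0 (C : numClosedFieldType) K (p : {poly C}) :
  (size p <= K)%N -> eqm K p 0 -> p = 0.
Proof.
move=> hs h; apply/polyP => i; rewrite coef0.
case: (ltnP i K) => hi; first by rewrite h ?coef0.
by rewrite nth_default // (leq_trans hs).
Qed.

Lemma cramer (C : numClosedFieldType) n (A : 'M[C]_n) (q r : 'I_n -> C) (i : 'I_n) :
  (forall i0, \sum_j A i0 j * q j = r i0) ->
  \det (\matrix_(i0, c) if c == i then r i0 else A i0 c) = \det A * q i.
Proof.
move=> hA.
set E : 'M[C]_n := \matrix_(k, c) if c == i then q k else (k == c)%:R.
have -> : (\matrix_(i0, c) if c == i then r i0 else A i0 c) = A *m E.
  apply/matrixP => i0 c; rewrite !mxE.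
  under eq_bigr do rewrite mxE.
  case: eqP => hc; first by rewrite -hA.
  rewrite (bigD1 c) //= eqxx mulr1 big1 ?addr0 // => k hk.
  by rewrite (negbTE hk) mulr0.
rewrite det_mulmx; congr (_ * _).
rewrite (expand_det_row _ i) (bigD1 i) //= big1 ?addr0; last first.
  move=> c hc; rewrite mxE (negbTE hc).
  by rewrite eq_sym (negbTE hc) mul0r.
rewrite mxE eqxx /cofactor sg2 mul1r.
have -> : row' i (col' i E) = 1%:M.
  apply/matrixP => k c; rewrite !mxE (inj_eq (@lift_inj _ i)).
  by rewrite eq_sym (negbTE (neq_lift i c)).
by rewrite det1 mulr1.
Qed.

Theorem theorem2 (C : numClosedFieldType) (m : nat) (a b c d : C)
    (T U : {poly C}) (x y : 'I_m -> C) :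
  size T = (2 * m + 2).+1 ->
  (size U <= 2 * m + 1)%N ->
  T ^+ 2 - Hpoly a b c d * U ^+ 2 = 1 ->
  (a - c) * (a - d) * \prod_(j < m) (a - x j) ^+ 2 != 0 ->
  (c - a) * (c - b) * \prod_(j < m) (c - y j) ^+ 2 != 0 ->
  T = 1 - (2 / ((a - c) * (a - d) * \prod_(j < m) (a - x j) ^+ 2)) *:
            (('X - c%:P) * ('X - d%:P) * \prod_(j < m) ('X - (x j)%:P) ^+ 2) ->
  T = -1 + (2 / ((c - a) * (c - b) * \prod_(j < m) (c - y j) ^+ 2)) *:
            (('X - a%:P) * ('X - b%:P) * \prod_(j < m) ('X - (y j)%:P) ^+ 2) ->
  let s := sk a b c d in
  \det (Fmx s m.+1 m) != 0 /\
  (\det (Fmx s m.+1 m))%:P * 'X^m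
    + \sum_(i < m) (\det (Fimx s m.+1 i))%:P * 'X^(m - i.+1)
  = (\det (Fmx s m.+1 m)) *: \prod_(j < m) ('X - (x j)%:P).
Proof.
move=> hsT hsU hpell hDa hDc hT1 hT2 s.
have [g [hg hid]] := step1 C m a b c d T x y hDc hT1 hT2.
set Xt := \prod_(j < m) lin (x j) in hid *.
set Yt := \prod_(j < m) lin (y j) in hid *.
set K := (2 * m + 2)%N in hid.
have hX0 : Xt`_0 = 1 by apply: prodlin0.
have hY0 : Yt`_0 = 1 by apply: prodlin0.
have hXs : (size Xt <= m.+1)%N by apply: size_prodlin.
have hYs : (size Yt <= m.+1)%N by apply: size_prodlin.
have heqm : eqm K (lin a * lin b * Yt ^+ 2) (lin c * lin d * Xt ^+ 2).
  move=> i hi; move/eqP: hid; rewrite subr_eq => /eqP ->.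
  by rewrite coefD coefCM coefXn (ltn_eqF hi) mulr0 add0r.
have hU := step2 C K a b c d Xt Yt heqm hX0 hY0.
set q := fun j => Xt`_j.
have hA : forall r : 'I_m, \sum_(j < m) Fmx s m.+1 m r j * q j.+1 = - fn s (m.+2 + r).
  move=> r; have hr : (m.+2 + r < K)%N by rewrite /K; have := ltn_ord r; lia.
  have := hU _ hr; rewrite (coefM_le _ _ _ m) //; last by lia.
  rewrite big_ord_recl (_ : Xt`_(@ord0 m) = 1) // mul1r [(lin a * Yt)`_ _]nth_default; last first.
    by rewrite (leq_trans (size_mul_leq _ _)) //; move: (size_lin C a) hYs; lia.
  rewrite coef_poly hr subn0 => /eqP; rewrite addr_eq0 => /eqP ->; rewrite opprK.
  apply: eq_bigr => j _.
  have e : (m.+2 + r - j.+1 = m.+1 + r - j)%N by lia.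
  rewrite mxE /q lift0 e subzn; last first.
    by have := ltn_ord j; lia.
  rewrite Fk_fn mulrC coef_poly; congr (_ * _).
  by rewrite ifT //; move: (ltn_ord j) hr; rewrite /K; lia.
have hcr : forall i : 'I_m, \det (Fimx s m.+1 i) = \det (Fmx s m.+1 m) * q i.+1.
  move=> i; rewrite -(cramer _ _ (Fmx s m.+1 m) (fun j => q j.+1)
                       (fun r => - fn s (m.+2 + r)) i hA).
  congr (\det _); apply/matrixP => r k; rewrite !mxE; case: ifP => // _.
  by rewrite Fk_fn addnS -addSn.
have hR : \prod_(j < m) ('X - (x j)%:P) = 'X^m + \sum_(i < m) (q i.+1)%:P * 'X^(m - i.+1).
  apply: poly_eq_nz => w hw.
  have hwi : w^-1 != 0 by rewrite invr_eq0.
  have := eval_prodlin C m x w^-1 hwi; rewrite invrK (horner_coef_wide _ hXs).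
  rewrite big_ord_recl hX0 mul1r expr0 => e.
  rewrite horner_prod.
  under eq_bigr do rewrite hornerXsubC.
  rewrite hornerD horner_sum hornerXn.
  apply: (@mulfI _ (w^-1 ^+ m)); first by rewrite expf_neq0.
  rewrite -e mulrDr mulr_sumr exprVn mulVf ?expf_neq0 //; congr (_ + _).
  apply: eq_bigr => i _; rewrite lift0 hornerM hornerC hornerXn.
  rewrite (@expfB_cond _ m i.+1 w); last by rewrite (negbTE hw) add0n.
  rewrite /q /= !exprVn; field.
  by rewrite !expf_neq0.
split; last first.
  under eq_bigr do rewrite hcr polyCM -mulrA.
  by rewrite hR -mul_polyC mulrDr mulr_sumr.
apply/negP => hd0.
have [v hv0 hv] : exists2 v : 'rV_m, v != 0 & v *m (Fmx s m.+1 m)^T = 0.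
  by apply/det0P; rewrite det_tr.
set V1 := \poly_(k < m) (\sum_(j < m | val j == k) v 0 j).
have hV1s : (size V1 <= m)%N by apply: size_poly.
have hV1c : forall j : 'I_m, V1`_j = v 0 j.
  by move=> j; rewrite coef_poly ltn_ord (big_pred1 j).
have hV1nz : V1 != 0.
  apply: contra hv0 => /eqP h; apply/eqP/matrixP => i j.
  by rewrite (ord1 i) mxE -hV1c h coef0.
have hvr : forall r : 'I_m, \sum_(j < m) v 0 j * Fmx s m.+1 m r j = 0.
  move=> r; have := congr1 (fun M : 'M[C]_(1, m) => M 0 r) hv.
  rewrite /= mxE [X in _ = X -> _]mxE => h; rewrite -[RHS]h.
  by apply: eq_bigr => j _; rewrite !mxE.
set F := Phi K s.
have hVF : forall r : 'I_m, (V1 * F)`_(m.+1 + r) = 0.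
  move=> r; rewrite (coefM_le _ _ _ m) ?(leq_trans hV1s) //; last by lia.
  rewrite big_ord_recr /= [V1`_m]nth_default // mul0r addr0 -[RHS](hvr r).
  apply: eq_bigr => j _; rewrite hV1c mxE subzn; last by have := ltn_ord j; lia.
  rewrite Fk_fn coef_poly ifT //; move: (ltn_ord j) (ltn_ord r); rewrite /K; lia.
set A := \poly_(i < m.+1) (V1 * F)`_i.
have hAs : (size A <= m.+1)%N by apply: size_poly.
have hVA : eqm (2 * m + 1) (V1 * F) A.
  move=> i hi; rewrite coef_poly; case: ltnP => // him.
  have hr : (i - m.+1 < m)%N by lia.
  have := hVF (Ordinal hr); rewrite /= subnKC //.
set V := lin a * Yt.
have hVs : (size V <= m.+2)%N.
  by rewrite (leq_trans (size_mul_leq _ _)) //; move: (size_lin C a) hYs; lia.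
have hW : Xt * A = V1 * V.
  apply/eqP; rewrite -subr_eq0; apply/eqP; apply: (@eqm_size0 _ (2 * m + 1)).
    rewrite (leq_trans (size_polyD _ _)) // size_polyN geq_max.
    apply/andP; split; rewrite (leq_trans (size_mul_leq _ _)) //.
    move: hXs hAs; set u := size Xt; set u2 := size A; lia.
    move: hV1s hVs; set u := size V1; set u2 := size V; lia.
  move=> i hi; rewrite coef0 coefB.
  have e1 : (Xt * A)`_i = (Xt * (V1 * F))`_i.
    by apply: eqmMl; [apply: eqm_sym; apply: hVA | ].
  have e2 : (V1 * (Xt * F))`_i = (V1 * V)`_i.
    by apply: eqmMl; [apply: hU | rewrite /K; lia].
  by rewrite e1 mulrCA e2 subrr.
have hinv : (g^-1)%:P * g%:P = 1 :> {poly C} by rewrite -polyCM mulVf.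
have key : 'X^K * V1 = Xt * ((g^-1)%:P * (lin b * Yt * A - lin c * lin d * Xt * V1)).
  transitivity ((g^-1)%:P * (V1 * (lin a * lin b * Yt ^+ 2 - lin c * lin d * Xt ^+ 2))).
    by rewrite hid; transitivity (((g^-1)%:P * g%:P) * ('X^K * V1)); [rewrite hinv mul1r | ring].
  transitivity ((g^-1)%:P * (lin b * Yt * (Xt * A) - lin c * lin d * Xt ^+ 2 * V1)); last by ring.
  by rewrite hW /V; ring.
have hXnz : Xt != 0 by apply/eqP => h; move: hX0; rewrite h coef0 => /eqP; rewrite eq_sym oner_eq0.
have hcop : coprimep Xt 'X^K.
  apply: coprimep_expr; have := coprimep_XsubC Xt 0; rewrite polyC0 subr0 => ->.
  by rewrite /root horner_coef0 hX0 oner_eq0.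
have hdvd : Xt %| V1 by rewrite -(Gauss_dvdpr _ hcop) key dvdp_mulIl.
have [Q hQ] := dvdpP _ _ hdvd.
have hQnz : Q != 0 by apply: contra hV1nz => /eqP h; rewrite hQ h mul0r.
case: (eqVneq (size Xt) m.+1) => hXm.
  by move: (dvdp_leq hV1nz hdvd); rewrite hXm; move: hV1s; set u := size V1; lia.
have hXs' : (size Xt <= m)%N by move: hXs hXm; set u := size Xt; lia.
have hc0 : (lin c * lin d * Xt ^+ 2)`_K = 0.
  apply: nth_default; rewrite expr2.
  rewrite (leq_trans (size_mul_leq _ _)) //.
  have h1 := size_mul_leq Xt Xt.
  have h2 := size_mul_leq (lin c) (lin d).
  move: h1 h2 (size_lin C c) (size_lin C d) hXs'; rewrite /K.
  set u1 := size (Xt * Xt); set u2 := size (lin c * lin d).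
  set u3 := size (lin c); set u4 := size (lin d); set u5 := size Xt; lia.
have hLK : (lin a * lin b * Yt ^+ 2)`_K = g.
  move/eqP: hid; rewrite subr_eq => /eqP ->.
  by rewrite coefD coefCM coefXn eqxx mulr1 hc0 addr0.
have hLs : (K < size (lin a * lin b * Yt ^+ 2)%R)%N.
  case: (ltnP K (size (lin a * lin b * Yt ^+ 2)%R)) => // h.
  by move: hg; rewrite -hLK nth_default ?eqxx.
have eL : lin a * lin b * Yt ^+ 2 = V * (lin b * Yt) by rewrite /V; ring.
have hVs2 : (m.+2 <= size V)%N.
  move: hLs; rewrite eL => hLs.
  have h1 := size_mul_leq V (lin b * Yt).
  have h2 := size_mul_leq (lin b) Yt.
  move: hLs h1 h2 (size_lin C b) hYs; rewrite /K.
  set u1 := size (V * _); set u2 := size V; set u3 := size (lin b * Yt).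
  set u4 := size (lin b); set u5 := size Yt; lia.
have hVnz : V != 0 by rewrite -size_poly_gt0 (leq_trans _ hVs2).
have hAQ : A = Q * V.
  apply: (mulfI hXnz); rewrite hW hQ; ring.
move: hAs; rewrite hAQ size_mul //.
have := size_poly_gt0 Q; rewrite hQnz.
move: hVs2; set u1 := size Q; set u2 := size V; lia.
Qed.
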